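(* Let $P$ be a polyhedron, $F$ a poset, and $f\colon P\to F$ a surjective open polyhedral map. Whenever $x<y$ in $F$, we have $f^{-1}[x]\subseteq\partial f^{-1}[y]$.
   Context: A polyhedron is a finite union of convex hulls of finite subsets of some $\mathbb R^d$. $\mathrm{Sub}_o P$ denotes the set of open subpolyhedra of $P$ (sets $P\setminus R$ with $R\subseteq P$ a polyhedron). A map $f\colon P\to F$ to a poset is polyhedral if $f^{-1}[U]\in\mathrm{Sub}_o P$ for every upset $U$ of $F$, and open if $f[W]$ is an upset of $F$ for every $W\in\mathrm{Sub}_o P$. We write $f^{-1}[x]$ for $f^{-1}[\{x\}]$. For a set $X\subseteq\mathbb R^d$, its boundary is $\partial X=\mathrm{Cl}\,X\setminus\mathrm{Int}^{\mathrm{Aff}}X$, where $\mathrm{Int}^{\mathrm{Aff}}$ is the interior taken inside the affine hull $\mathrm{Aff}\,X$ of $X$. *)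

(* Defs.v *)
From HB Require Import structures.
From mathcomp Require Import all_boot all_order all_algebra.
From mathcomp Require Import all_classical all_reals all_analysis.
Set Implicit Arguments. Unset Strict Implicit. Unset Printing Implicit Defensive.
Import Order.TTheory GRing.Theory Num.Theory.
Import numFieldNormedType.Exports.
Local Open Scope classical_set_scope.
Local Open Scope ring_scope.

Definition conv_hull (R : realType) (d : nat) (s : seq 'rV[R]_d) : set 'rV[R]_d :=
  [set x | exists l : 'I_(size s) -> R,
     (forall i, 0 <= l i) /\ \sum_i l i = 1 /\
     x = \sum_i l i *: s`_i].

Definition polyhedron (R : realType) (d : nat) (P : set 'rV[R]_d) : Prop :=
  exists ss : seq (seq 'rV[R]_d),
    P = [set x | exists2 s, s \in ss & conv_hull s x].

Definition open_subpolyhedron (R : realType) (d : nat) (P W : set 'rV[R]_d) : Prop :=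
  exists Q, polyhedron Q /\ Q `<=` P /\ W = P `\` Q.

Definition upset (disp : Order.disp_t) (F : porderType disp) (U : set F) : Prop :=
  forall x y : F, U x -> (x <= y)%O -> U y.

(* f : P -> F is represented by a total function whose values off P are irrelevant. *)
Definition polyhedral_map (R : realType) (d : nat) (disp : Order.disp_t)
    (F : porderType disp) (P : set 'rV[R]_d) (f : 'rV[R]_d -> F) : Prop :=
  forall U : set F, upset U -> open_subpolyhedron P (P `&` f @^-1` U).

Definition open_map_on (R : realType) (d : nat) (disp : Order.disp_t)
    (F : porderType disp) (P : set 'rV[R]_d) (f : 'rV[R]_d -> F) : Prop :=
  forall W, open_subpolyhedron P W -> upset (f @` W).

Definition fibre (R : realType) (d : nat) (disp : Order.disp_t)
    (F : porderType disp) (P : set 'rV[R]_d) (f : 'rV[R]_d -> F) (x : F) :=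
  P `&` f @^-1` [set x].

Definition aff_hull (R : realType) (d : nat) (X : set 'rV[R]_d) : set 'rV[R]_d :=
  [set x | exists (s : seq 'rV[R]_d) (l : 'I_(size s) -> R),
     (forall i, X s`_i) /\ \sum_i l i = 1 /\ x = \sum_i l i *: s`_i].

Definition aff_interior (R : realType) (d : nat) (X : set 'rV[R]_d) : set 'rV[R]_d :=
  [set x | X x /\ exists2 e : R, 0 < e & ball x e `&` aff_hull X `<=` X].

Definition aff_boundary (R : realType) (d : nat) (X : set 'rV[R]_d) : set 'rV[R]_d :=
  closure X `\` aff_interior X.

(* Main.v *)
Require Import Defs.
From HB Require Import structures.
From mathcomp Require Import all_boot all_order all_algebra.
From mathcomp Require Import all_classical all_reals all_analysis.
From mathcomp Require Import ring lra.
Set Implicit Arguments. Unset Strict Implicit. Unset Printing Implicit Defensive.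
Import Order.TTheory GRing.Theory Num.Theory.
Import numFieldNormedType.Exports.
Local Open Scope classical_set_scope.
Local Open Scope ring_scope.

Section Geo.
Variables (R : realType) (d : nat).
Local Notation V := 'rV[R]_d.

Definition phi (c : 'cV[R]_d) (z : V) : R := (z *m c) 0 0.

Lemma phi_sum (I : finType) (w : I -> R) (v : I -> V) c :
  phi c (\sum_i w i *: v i) = \sum_i w i * phi c (v i).
Proof.
rewrite /phi mulmx_suml summxE; apply: eq_bigr => i _.
by rewrite -scalemxAl mxE.
Qed.

Lemma phi_lin c a b (x y : V) : phi c (a *: x + b *: y) = a * phi c x + b * phi c y.
Proof. by rewrite /phi mulmxDl -!scalemxAl !mxE. Qed.

Lemma sum_ord_if (U : nmodType) n m (G : nat -> U) : (m < n)%N ->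
  \sum_(k < n) (if m == k :> nat then G k else 0) = G m.
Proof.
move=> hm; rewrite (bigD1 (Ordinal hm)) //= eqxx big1 ?addr0 // => k hk.
rewrite ifN //; apply: contra hk => /eqP e; apply/eqP/val_inj => /=; by rewrite e.
Qed.

Lemma hull_fam (s : seq V) (I : finType) (w : I -> R) (v : I -> V) :
  (forall i, 0 <= w i) -> \sum_i w i = 1 -> (forall i, 0 < w i -> v i \in s) ->
  conv_hull s (\sum_i w i *: v i).
Proof.
move=> w0 w1 wv.
exists (fun k : 'I_(size s) => \sum_i (if (0 < w i) && (index (v i) s == k) then w i else 0)).
have key : forall (U : lmodType R) (G : nat -> U) (H : I -> U),
   (forall i, 0 < w i -> G (index (v i) s) = H i) ->
   \sum_(k < size s) \sum_i (if (0 < w i) && (index (v i) s == k) then w i *: G k else 0)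
   = \sum_i w i *: H i.
  move=> U G H hGH; rewrite exchange_big /=; apply: eq_bigr => i _.
  have [wp|wn] := boolP (0 < w i).
    under eq_bigr do rewrite /=.
    rewrite (sum_ord_if (fun k => w i *: G k)) ?index_mem ?wv // hGH //.
  have -> : w i = 0 by apply/eqP; rewrite eq_le w0 andbT leNgt.
  by rewrite scale0r big1.
split; first by move=> k; apply: sumr_ge0 => i _; case: ifP.
split.
  rewrite exchange_big /= -w1; apply: eq_bigr => i _.
  have [wp|wn] := boolP (0 < w i).
    by rewrite (sum_ord_if (fun k => w i)) ?index_mem ?wv.
  have -> : w i = 0 by apply/eqP; rewrite eq_le w0 andbT leNgt.
  by rewrite big1 // => k; case: ifP.
rewrite -(key _ (fun k => s`_k) v); last by move=> i /wv hi; rewrite nth_index.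
apply: eq_bigr => k _; rewrite scaler_suml; apply: eq_bigr => i _.
by case: ifP => // _; rewrite scale0r.
Qed.


Lemma hull_phi (T : seq V) c t z : (forall u, u \in T -> t <= phi c u) ->
  conv_hull T z -> t <= phi c z.
Proof.
move=> hT [l [l0 [l1 ->]]]; rewrite phi_sum.
have -> : t = \sum_i l i * t by rewrite -mulr_suml l1 mul1r.
apply: ler_sum => i _; apply: ler_wpM2l => //; apply: hT; exact: mem_nth.
Qed.

Lemma hull_sub (s T : seq V) : (forall u, u \in T -> conv_hull s u) ->
  conv_hull T `<=` conv_hull s.
Proof.
move=> hT z [l [l0 [l1 ->]]].
have : forall k : 'I_(size T), exists m : 'I_(size s) -> R,
   (forall j, 0 <= m j) /\ \sum_j m j = 1 /\ T`_k = \sum_j m j *: s`_j.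
  by move=> k; apply: hT; exact: mem_nth.
case/choice => m hm.
exists (fun j => \sum_k l k * m k j); split.
  move=> j; apply: sumr_ge0 => k _; apply: mulr_ge0 => //; by case: (hm k).
split.
  rewrite exchange_big /= -l1; apply: eq_bigr => k _.
  by rewrite -mulr_sumr; case: (hm k) => _ [-> _]; rewrite mulr1.
apply/esym; under eq_bigr do rewrite scaler_suml.
rewrite exchange_big /=; apply: eq_bigr => k _.
case: (hm k) => _ [_ ->]; rewrite scaler_sumr; apply: eq_bigr => j _.
by rewrite scalerA.
Qed.

Definition cross c t (a b : V) : V :=
  ((phi c a - t) / (phi c a - phi c b)) *: b + ((t - phi c b) / (phi c a - phi c b)) *: a.

Definition Tcut (s : seq V) c t : seq V :=
  [seq a <- s | t <= phi c a] ++
  [seq cross c t a b | a <- [seq a <- s | t <= phi c a], b <- [seq b <- s | phi c b < t]].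

Lemma Tcut_phi s c t u : u \in Tcut s c t -> t <= phi c u.
Proof.
rewrite mem_cat => /orP[|/allpairsP[[a b] /= [ha hb ->]]].
  by rewrite mem_filter => /andP[].
move: ha hb; rewrite !mem_filter => /andP[ha _] /andP[hb _].
rewrite /cross phi_lin.
have h : phi c a - phi c b != 0 by rewrite subr_eq0 gt_eqF //; lra.
rewrite le_eqVlt; apply/orP; left; apply/eqP; field; exact h.
Qed.

Lemma Tcut_in s c t u : u \in Tcut s c t -> conv_hull s u.
Proof.
rewrite mem_cat => /orP[|/allpairsP[[a b] /= [ha hb ->]]].
  rewrite mem_filter => /andP[_ hu].
  have h1 : \sum_(i < 1) (1:R) = 1 by rewrite big_ord1.
  have h := @hull_fam s 'I_1 (fun _ => 1) (fun _ => u) (fun _ => ler01) h1 (fun _ _ => hu).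
  have e : \sum_(i < 1) (fun _ => 1) i *: (fun _ => u) i = u by rewrite big_ord1 scale1r.
  by rewrite e in h.
move: ha hb; rewrite !mem_filter => /andP[ha as_] /andP[hb bs].
have h : 0 < phi c a - phi c b by lra.
pose w := fun i : bool => if i then (phi c a - t) / (phi c a - phi c b)
                                 else (t - phi c b) / (phi c a - phi c b).
pose v := fun i : bool => if i then b else a.
have w0 : forall i, 0 <= w i by case; rewrite /w; apply: divr_ge0; lra.
have w1 : \sum_i w i = 1.
  rewrite big_bool /w /=; have hn : phi c a - phi c b != 0 by lra.
  field; exact hn.
have h2 := @hull_fam s bool w v w0 w1 (fun i _ => if i as i return v i \in s then bs else as_).
have e : \sum_i w i *: v i = cross c t a b by rewrite big_bool.
by rewrite e in h2.
Qed.


Section Cut.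
Variables (s : seq V) (c : 'cV[R]_d) (t : R) (l : 'I_(size s) -> R).
Hypotheses (l0 : forall k, 0 <= l k) (l1 : \sum_k l k = 1)
  (hz : t <= \sum_k l k * phi c s`_k).
Local Notation n := (size s).
Let f (k : 'I_n) := phi c s`_k.
Let A (k : 'I_n) := t <= f k.
Let E := \sum_(k | A k) l k * (f k - t).
Let D := \sum_(k | ~~ A k) l k * (t - f k).

Lemma E0 : 0 <= E.
Proof. by apply: sumr_ge0 => k hk; apply: mulr_ge0 => //; rewrite subr_ge0. Qed.

Lemma D0 : 0 <= D.
Proof. apply: sumr_ge0 => k hk; apply: mulr_ge0 => //; rewrite subr_ge0 ltW //; by rewrite ltNge. Qed.

Lemma DE : D <= E.
Proof.
rewrite -subr_ge0.
have -> : E - D = \sum_k l k * (f k - t).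
  rewrite (bigID A predT) /= /E /D; congr (_ + _).
  rewrite -sumrN; apply: eq_bigr => k _; by rewrite -mulrN opprB.
under eq_bigr do rewrite mulrBr.
by rewrite sumrB -mulr_suml l1 mul1r subr_ge0.
Qed.

Lemma B0 : E = 0 -> forall k, ~~ A k -> l k = 0.
Proof.
move=> e0 k hk.
have D00 : D = 0 by apply/eqP; rewrite eq_le D0 andbT -e0 DE.
have p : forall k, ~~ A k -> 0 <= l k * (t - f k).
  by move=> j hj; apply: mulr_ge0 => //; rewrite subr_ge0 ltW // ltNge.
have := psumr_eq0P p D00 hk.
move=> /eqP; rewrite mulf_eq0 => /orP[/eqP //|].
by rewrite subr_eq0 => /eqP e; move: hk; rewrite /A e lexx.
Qed.


Let wI (i : ('I_n + 'I_n * 'I_n)%type) : R :=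
  match i with
  | inl k => if A k then l k * (1 - D / E) else 0
  | inr p => if A p.1 && ~~ A p.2 then l p.1 * l p.2 * (f p.1 - f p.2) / E else 0
  end.

Let vG (U : lmodType R) (G : 'I_n -> U) (i : ('I_n + 'I_n * 'I_n)%type) : U :=
  match i with
  | inl k => G k
  | inr p => ((f p.1 - t) / (f p.1 - f p.2)) *: G p.2 + ((t - f p.2) / (f p.1 - f p.2)) *: G p.1
  end.

Lemma gen_sum (U : lmodType R) (G : 'I_n -> U) :
  \sum_i wI i *: vG G i = \sum_k l k *: G k.
Proof.
rewrite big_sumType /=.
set SA := \sum_(k | A k) l k *: G k.
set SB := \sum_(k | ~~ A k) l k *: G k.
have h1 : \sum_k (if A k then l k * (1 - D / E) else 0) *: G k = SA - (D / E) *: SA.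
  rewrite (bigID A predT) /= [X in _ + X]big1 ?addr0; last first.
    by move=> k /negbTE ->; rewrite scale0r.
  rewrite /SA scaler_sumr -sumrB; apply: eq_bigr => k ->.
  by rewrite mulrBr mulr1 scalerBl scalerA (mulrC (D / E)).
have h2 : \sum_p (if A p.1 && ~~ A p.2 then l p.1 * l p.2 * (f p.1 - f p.2) / E else 0)
     *: vG G (inr p) = (E / E) *: SB + (D / E) *: SA.
  rewrite (bigID (fun p => A p.1 && ~~ A p.2)) /= [X in _ + X]big1 ?addr0; last first.
    by move=> p /negbTE ->; rewrite scale0r.
  rewrite (eq_bigr (fun p => (l p.1 * (f p.1 - t) / E * l p.2) *: G p.2 +
                             (l p.2 * (t - f p.2) / E * l p.1) *: G p.1)); last first.
    move=> [a b] /= /andP[ha hb]; rewrite ha hb /=.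
    have hn : f a - f b != 0.
      by rewrite subr_eq0 gt_eqF // (lt_le_trans _ ha) // ltNge.
    rewrite scalerDr !scalerA; congr (_ *: _ + _ *: _);
      by move: (E^-1) => ie; field; exact hn.
  rewrite -(pair_big A (fun b => ~~ A b) (fun a b => (l a * (f a - t) / E * l b) *: G b +
                             (l b * (t - f b) / E * l a) *: G a)) /=.
  under eq_bigr do rewrite big_split /=.
  rewrite big_split /=; congr (_ + _).
    under eq_bigr do under eq_bigr do rewrite -scalerA.
    under eq_bigr do rewrite -scaler_sumr.
    by rewrite -scaler_suml /E mulr_suml.
  under eq_bigr do under eq_bigr do rewrite -scalerA.
  under eq_bigr do rewrite -scaler_suml -mulr_suml.
  by rewrite -scaler_sumr /D.
rewrite h1 h2.
have -> : (E / E) *: SB = SB.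
  have [e0|en] := eqVneq E 0.
    rewrite /SB big1 ?scaler0 // => k hk; by rewrite (B0 e0 hk) scale0r.
  by rewrite divff // scale1r.
by rewrite [SB + _]addrC addrA subrK (bigID A predT).
Qed.



Lemma cover_sec : conv_hull (Tcut s c t) (\sum_k l k *: s`_k).
Proof.
have hv := gen_sum (fun k => s`_k).
rewrite -hv; apply: hull_fam.
- case=> [k|[a b]] /=.
    case: ifP => // _; apply: mulr_ge0 => //; rewrite subr_ge0.
    have [e0|en] := eqVneq E 0; first by rewrite e0 invr0 mulr0 ler01.
    have ep : 0 < E by rewrite lt_def en E0.
    by rewrite ler_pdivrMr // mul1r DE.
  case: ifP => // /andP[ha hb]; apply: divr_ge0; last exact: E0.
  apply: mulr_ge0; first exact: mulr_ge0.
  by rewrite subr_ge0 ltW // (lt_le_trans _ ha) // ltNge.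
- have hw := gen_sum (U := R^o) (fun _ => 1).
  rewrite -l1 (eq_bigr (fun k => l k *: (1 : R^o))); last first.
    by move=> k _; rewrite /GRing.scale /= mulr1.
  rewrite -hw; apply: eq_bigr; case=> [k|[a b]] _ /=.
    by rewrite /GRing.scale /= mulr1.
  rewrite /GRing.scale /=; case: ifP => [/andP[ha hb]|_]; last by rewrite mul0r.
  have hn : f a - f b != 0.
    by rewrite subr_eq0 gt_eqF // (lt_le_trans _ ha) // ltNge.
  by move: (l a * l b * (f a - f b) / E) => x; field; exact hn.
- case=> [k|[a b]] /=.
    case: ifP => [hk _|_]; last by rewrite ltxx.
    rewrite mem_cat mem_filter; apply/orP; left; apply/andP; split; [exact: hk | exact: mem_nth].
  case: ifP => [/andP[ha hb] _|_]; last by rewrite ltxx.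
  rewrite mem_cat; apply/orP; right.
  change (cross c t s`_a s`_b \in [seq cross c t a0 b0 | a0 <- [seq a0 <- s | t <= phi c a0],
           b0 <- [seq b0 <- s | phi c b0 < t]]).
  apply: allpairs_f; rewrite mem_filter; apply/andP; split; try exact: mem_nth.
    exact: ha.
  by rewrite ltNge.
Qed.

End Cut.


Lemma Tcut_cover s c t z : conv_hull s z -> t <= phi c z -> conv_hull (Tcut s c t) z.
Proof.
move=> [l [l0 [l1 ->]]]; rewrite phi_sum => hz; exact: cover_sec.
Qed.

End Geo.

Lemma phi_delta (R : realType) d (p : 'rV[R]_d) i : phi (delta_mx i 0) p = p 0 i.
Proof. by rewrite /phi -colE mxE. Qed.

Lemma phi_ndelta (R : realType) d (p : 'rV[R]_d) i : phi (- delta_mx i 0) p = - p 0 i.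
Proof. by rewrite /phi mulmxN -colE !mxE. Qed.

Lemma aux1 (R : realType) (a b e : R) : e <= a - b -> - a + e <= - b.
Proof. lra. Qed.
Lemma aux2 (R : realType) (a b e : R) : e <= - (a - b) -> a + e <= b.
Proof. lra. Qed.

Unset Implicit Arguments.
Local Close Scope ring_scope.

Theorem lemma6p1 (R : realType) (d : nat) (disp : Order.disp_t)
    (F : porderType disp) (P : set 'rV[R]_d) (f : 'rV[R]_d -> F) :
  polyhedron P ->
  f @` P = setT ->
  open_map_on P f ->
  polyhedral_map P f ->
  forall x y : F, (x < y)%O -> fibre P f x `<=` aff_boundary (fibre P f y).
Proof.
Local Open Scope ring_scope.
move=> [ss hP] _ hopen _ x y xy p [Pp fpx].
split; last first.
  move=> [[_ fpy] _]; move: xy; rewrite -fpx /= fpy; by rewrite ltxx.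
move=> B /nbhs_ballP [e /= e0 hB].
apply: contrapT => hne.
pose dirs : seq ('cV[R]_d * R) :=
  [seq (delta_mx i 0, p 0 i + e) | i <- enum 'I_d] ++
  [seq (- delta_mx i 0, - p 0 i + e) | i <- enum 'I_d].
have dirs_p : forall ct, ct \in dirs -> phi ct.1 p < ct.2.
  move=> ct; rewrite mem_cat => /orP[] /mapP[i _ ->] /=.
    by rewrite phi_delta ltrDl.
  by rewrite phi_ndelta ltrDl.
pose TT := [seq Tcut s ct.1 ct.2 | s <- ss, ct <- dirs].
pose Q := [set z | exists2 T, T \in TT & conv_hull T z].
have QP : Q `<=` P.
  move=> z [T /allpairsP[[s ct] /= [hs hct ->]] hz].
  rewrite hP; exists s => //; apply: (hull_sub (T := Tcut s ct.1 ct.2)) => //.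
  by move=> u; apply: Tcut_in.
have hW : open_subpolyhedron P (P `\` Q).
  exists Q; split => //; by exists TT.
have Qp : ~ Q p.
  move=> [T /allpairsP[[s ct] /= [hs hct ->]] hz].
  have := hull_phi (@Tcut_phi _ _ s ct.1 ct.2) hz.
  by rewrite leNgt dirs_p.
have := hopen _ hW x y (ex_intro2 _ _ p (conj Pp Qp) fpx) (ltW xy).
move=> [w [Pw Qw] fwy].
apply: hne; exists w; split; first by split.
apply: hB; split => // i j.
rewrite -ball_normE /ball_ /= ltNge; apply/negP => he.
apply: Qw.
have := Pw; rewrite hP => -[s hs hsw].
rewrite (ord1 i) in he.
move: he; rewrite ler_normr => /orP[he|he].
  exists (Tcut s (- delta_mx j 0) (- p 0 j + e)).
    apply/allpairsP; exists (s, (- delta_mx j 0, - p 0 j + e)); split => //=.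
    rewrite mem_cat; apply/orP; right.
    by apply: (map_f (fun i => (- delta_mx i 0, - p 0 i + e))); rewrite mem_enum.
  apply: Tcut_cover => //; rewrite phi_ndelta; exact: aux1.
exists (Tcut s (delta_mx j 0) (p 0 j + e)).
  apply/allpairsP; exists (s, (delta_mx j 0, p 0 j + e)); split => //=.
  rewrite mem_cat; apply/orP; left.
  by apply: (map_f (fun i => (delta_mx i 0, p 0 i + e))); rewrite mem_enum.
apply: Tcut_cover => //; rewrite phi_delta; exact: aux2.
Qed.
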